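(* Let $(X,d)$ be a complete metric space and let $u:X\to\mathbb{R}\cup\{+\infty\}$ be a proper, lower semicontinuous function that is bounded from below. Then there is a sequence $\{z_n\}_{n\in\mathbb{N}}\subset X$ such that \[\lim_{n\to\infty}G[u](z_n)=0\quad\text{and}\quad \sum_{n=0}^{\infty}G[u](z_n)\,d(z_n,z_{n+1})<+\infty.\]
   Context: For a function $u:X\to\mathbb{R}\cup\{+\infty\}$ on a metric space $(X,d)$, the global slope is $G[u](x)=\sup_{y\neq x}\frac{(u(x)-u(y))_+}{d(x,y)}$ if $u(x)<+\infty$ and $G[u](x)=+\infty$ otherwise, where $\alpha_+=\max\{\alpha,0\}$. A function is proper if it is not identically $+\infty$. *)

(* Defs.v *)
From HB Require Import structures.
From mathcomp Require Import all_boot all_order all_algebra.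
From mathcomp Require Import all_classical all_reals all_analysis.
Set Implicit Arguments. Unset Strict Implicit. Unset Printing Implicit Defensive.
Import Order.TTheory GRing.Theory Num.Theory.
Local Open Scope classical_set_scope.
Local Open Scope ring_scope.

Definition is_metric (R : realType) (X : Type) (d : X -> X -> R) : Prop :=
  [/\ (forall x y, 0 <= d x y),
      (forall x y, d x y = 0 <-> x = y),
      (forall x y, d x y = d y x) &
      (forall x y z, d x z <= d x y + d y z)].

Definition cauchy_seq (R : realType) (X : Type) (d : X -> X -> R)
  (s : nat -> X) : Prop :=
  forall e : R, 0 < e -> exists N : nat, forall m n : nat,
    (N <= m)%N -> (N <= n)%N -> d (s m) (s n) < e.

Definition converges_to (R : realType) (X : Type) (d : X -> X -> R)
  (s : nat -> X) (x : X) : Prop :=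
  forall e : R, 0 < e -> exists N : nat, forall n : nat,
    (N <= n)%N -> d (s n) x < e.

Definition complete_metric (R : realType) (X : Type) (d : X -> X -> R) : Prop :=
  forall s : nat -> X, cauchy_seq d s -> exists x : X, converges_to d s x.

(* u : X -> R ∪ {+oo} is encoded as u : X -> \bar R never taking -oo. *)
Definition never_minfty (R : realType) (X : Type) (u : X -> \bar R) : Prop :=
  forall x, u x != -oo%E.

Definition proper_fun (R : realType) (X : Type) (u : X -> \bar R) : Prop :=
  exists x, u x != +oo%E.

Definition bounded_below (R : realType) (X : Type) (u : X -> \bar R) : Prop :=
  exists m : R, forall x, (m%:E <= u x)%E.

Definition lsc (R : realType) (X : Type) (d : X -> X -> R) (u : X -> \bar R) : Prop :=
  forall (x : X) (r : \bar R), (r < u x)%E ->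
    exists delta : R, 0 < delta /\ forall y, d x y < delta -> (r < u y)%E.

(* global slope G[u](x) = sup_{y <> x} (u x - u y)_+ / d(x,y) if u x < +oo,
   and +oo otherwise. 0 is adjoined to the set (harmless since all terms
   are >= 0) so that the sup over an empty index set is 0. *)
Definition global_slope (R : realType) (X : Type) (d : X -> X -> R)
  (u : X -> \bar R) (x : X) : \bar R :=
  if u x == +oo%E then +oo%E
  else ereal_sup ([set 0%E] `|`
         [set (maxe (u x - u y) 0 * ((d x y)^-1)%:E)%E | y in [set y | y <> x]]).

(* Main.v *)
Require Import Defs.
From mathcomp Require Import all_boot all_order all_algebra.
From mathcomp Require Import all_classical all_reals all_analysis.
From mathcomp Require Import ring lra.
Import Order.TTheory GRing.Theory Num.Theory.
Local Open Scope classical_set_scope.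
Local Open Scope ring_scope.
Set Implicit Arguments. Unset Strict Implicit.

Definition Sset (R : realType) (X : Type) (d : X -> X -> R) (u : X -> \bar R)
  (e : R) (x y : X) : Prop := (u y + (e * d x y)%:E <= u x)%E.

Lemma Sfin (R : realType) (X : Type) (d : X -> X -> R) (u : X -> \bar R)
  (hu_fin : never_minfty u) e x y :
  u x \is a fin_num -> Sset d u e x y ->
  u y \is a fin_num /\ fine (u y) + e * d x y <= fine (u x).
Proof.
move=> hx; rewrite /Sset -(fineK hx).
have := hu_fin y; case: (u y) => [r| |] //= _.
Qed.

Lemma Sfin_inv (R : realType) (X : Type) (d : X -> X -> R) (u : X -> \bar R)
  e x y :
  u x \is a fin_num -> u y \is a fin_num ->
  fine (u y) + e * d x y <= fine (u x) -> Sset d u e x y.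
Proof.
move=> hx hy h; rewrite /Sset -(fineK hx) -(fineK hy) -EFinD lee_fin //.
Qed.

Lemma Srefl (R : realType) (X : Type) (d : X -> X -> R) (u : X -> \bar R)
  (hd : is_metric d) e x : Sset d u e x x.
Proof.
case: hd => _ hdeq _ _; rewrite /Sset.
have -> : d x x = 0 by apply/hdeq.
by rewrite mulr0 adde0.
Qed.

Lemma Strans (R : realType) (X : Type) (d : X -> X -> R) (u : X -> \bar R)
  (hd : is_metric d) (hu_fin : never_minfty u) e x y z :
  0 <= e -> u x \is a fin_num -> Sset d u e x y -> Sset d u e y z -> Sset d u e x z.
Proof.
move=> he hx hxy hyz.
have [hy h1] := Sfin hu_fin hx hxy.
have [hz h2] := Sfin hu_fin hy hyz.
apply: Sfin_inv => //.
case: hd => _ _ _ htri.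
have := htri x y z => h3.
have : e * d x z <= e * d x y + e * d y z.
  by rewrite -mulrDr; apply: ler_wpM2l.
lra.
Qed.

Lemma archi2 (R : realType) (eps : R) : 0 < eps -> exists M : nat, 2 / M.+1%:R < eps.
Proof.
move=> he; exists (Num.trunc (2 / eps)).
have h := truncnS_gt (2 / eps).
set M := (Num.trunc _).+1%:R in h *.
have hM : 0 < M by apply: lt_trans h; rewrite divr_gt0.
rewrite ltr_pdivrMr // -ltr_pdivrMl // mulrC //.
Qed.

Lemma ekeland (R : realType) (X : Type) (d : X -> X -> R)
  (hd : is_metric d) (hc : complete_metric d)
  (u : X -> \bar R) (hu_fin : never_minfty u) (hu_lsc : lsc d u)
  (m : R) (hm : forall x, (m%:E <= u x)%E) (e : R) (he : 0 < e)
  (x0 : X) (hx0 : u x0 \is a fin_num) :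
  exists xb, Sset d u e x0 xb /\ forall y, Sset d u e xb y -> y = xb.
Proof.
have hd' := hd; case: hd' => hpos hdeq hsym htri.
have step : forall p : nat * X, exists y, u p.2 \is a fin_num ->
    Sset d u e p.2 y /\
    forall z, Sset d u e p.2 z -> (u y <= u z + (e / p.1.+1%:R)%:E)%E.
  case=> n x /=.
  case: (boolP (u x \is a fin_num)) => hx; last by exists x.
  set I := ereal_inf [set u z | z in Sset d u e x].
  have hI : I \is a fin_num.
    rewrite fin_numElt; apply/andP; split.
      apply: (@lt_le_trans _ _ m%:E); first by rewrite ltNyr.
      by apply: le_ereal_inf_tmp => _ [z _ <-]; exact: hm.
    apply: (@le_lt_trans _ _ (u x)).
      by apply: ereal_inf_lbound; exists x => //; exact: Srefl.
    by move: hx; rewrite fin_numElt => /andP[].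
  have hd0 : 0 < e / n.+1%:R by rewrite divr_gt0.
  have [v [y hy <-] hv] := lb_ereal_inf_adherent hd0 hI.
  exists y => _; split => // z hz.
  apply: (le_trans (ltW hv)); apply: leeD => //.
  by apply: ereal_inf_lbound; exists z.
have [f hf] := choice step.
have [a [a0 aS]] : exists a : nat -> X, a 0%N = x0 /\ forall n, a n.+1 = f (n, a n).
  by exists (fix a n := if n is k.+1 then f (k, a k) else x0).
have afin : forall n, u (a n) \is a fin_num.
  elim=> [|n ih]; first by rewrite a0.
  rewrite aS; have [h _] := hf (n, a n) ih.
  exact: (Sfin hu_fin ih h).1.
have aS1 : forall n, Sset d u e (a n) (a n.+1) :=
  fun n => ltac:(rewrite aS; exact: (hf (n, a n) (afin n)).1).
have aSk : forall n k, Sset d u e (a n) (a (n + k)%N).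
  move=> n; elim=> [|k ih]; first by rewrite addn0; exact: Srefl.
  by rewrite addnS; apply: (Strans hd hu_fin (ltW he) (afin n) ih (aS1 _)).
have diam : forall n y, Sset d u e (a n.+1) y -> d (a n.+1) y <= n.+1%:R^-1.
  move=> n y hy.
  have hy' : Sset d u e (a n) y := Strans hd hu_fin (ltW he) (afin n) (aS1 n) hy.
  have h1 := (hf (n, a n) (afin n)).2 y hy'; rewrite -aS /= in h1.
  have [hyf h2] := Sfin hu_fin (afin n.+1) hy.
  have h3 : fine (u (a n.+1)) <= fine (u y) + e / n.+1%:R.
    by rewrite -lee_fin EFinD !fineK.
  have : e * d (a n.+1) y <= e * n.+1%:R^-1.
    by move: h3; set w := e / n.+1%:R; lra.
  by rewrite ler_pM2l.
have dfar : forall n k, d (a n.+1) (a (n.+1 + k)%N) <= n.+1%:R^-1 :=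
  fun n k => diam n _ (aSk _ _).
have cauchy : cauchy_seq d a.
  move=> eps heps; have [M hM] := archi2 heps.
  exists M.+1 => p q hp hq.
  rewrite -(subnKC hp) -(subnKC hq).
  have := htri (a (M.+1 + (p - M.+1))%N) (a M.+1) (a (M.+1 + (q - M.+1))%N).
  rewrite (hsym (a (M.+1 + (p - M.+1))%N) (a M.+1)).
  have := dfar M (p - M.+1)%N; have := dfar M (q - M.+1)%N.
  move: hM; set i := (M.+1%:R)^-1; lra.
have [xb hxb] := hc a cauchy.
have xbS : forall n, Sset d u e (a n) xb.
  move=> n; have [//|hnot] := pselect (Sset d u e (a n) xb); exfalso.
  set c := fine (u (a n)); set g := c - e * d (a n) xb.
  have [t [hgt ht]] : exists t, g < t /\ (t%:E < u xb)%E.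
    move: hnot; rewrite /Sset; have := hu_fin xb.
    case: (u xb) => [r| |] // _ hnot.
      have hlt : c < r + e * d (a n) xb.
        rewrite ltNge; apply/negP => hle; apply: hnot.
        by rewrite -(fineK (afin n)) -EFinD lee_fin.
      exists ((g + r) / 2); split; rewrite ?lte_fin /g; lra.
    by exists (g + 1); split; [lra | rewrite ltry].
  have [delta [hdel hlsc]] := hu_lsc xb t%:E ht.
  have hmin : 0 < Num.min delta ((t - g) / e).
    by rewrite lt_min hdel divr_gt0 // subr_gt0.
  have [N hN] := hxb _ hmin.
  have hp := hN (n + N)%N (leq_addl _ _).
  rewrite lt_min in hp; case/andP: hp => hp1 hp2.
  have hut : (t%:E < u (a (n + N)%N))%E by apply: hlsc; rewrite hsym.
  have [_ hS] := Sfin hu_fin (afin n) (aSk n N).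
  have ht' : t < fine (u (a (n + N)%N)) by rewrite -lte_fin fineK.
  have htr := htri (a n) (a (n + N)%N) xb.
  have hm1 : e * d (a n) xb <= e * d (a n) (a (n + N)%N) + e * d (a (n + N)%N) xb.
    by rewrite -mulrDr ler_wpM2l // ltW.
  rewrite ltr_pdivlMr // mulrC in hp2.
  rewrite /g in hgt hp2; rewrite /c in hgt hp2.
  lra.
have huniq : forall y, Sset d u e xb y -> y = xb.
  move=> y hy.
  have hle : forall n, d xb y <= 2 / n.+1%:R.
    move=> n.
    have hy' := Strans hd hu_fin (ltW he) (afin n.+1) (xbS n.+1) hy.
    have := diam n _ hy'; have := diam n _ (xbS n.+1).
    have := htri xb (a n.+1) y; rewrite (hsym xb (a n.+1)).
    set i := (n.+1%:R)^-1; lra.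
  have h0 : d xb y <= 0.
    rewrite leNgt; apply/negP => hp; have [M hM] := archi2 hp.
    have := hle M; move: hM; set i := (M.+1%:R)^-1; lra.
  have : d xb y = 0 by apply/eqP; rewrite eq_le h0 hpos.
  by move/hdeq.
by exists xb; split; [rewrite -a0; exact: xbS 0%N | exact: huniq].
Qed.

Lemma eps_le (R : realType) (n : nat) :
  (n.+1%:R : R)^-1 <= 2 * (n.+2%:R)^-1.
Proof.
rewrite -[X in X <= _]div1r ler_pdivrMr // mulrAC ler_pdivlMr // mul1r.
by rewrite -natrM ler_nat mul2n -addnn -addn1 leq_add2l.
Qed.

Lemma slope_ge0 (R : realType) (X : Type) (d : X -> X -> R) (u : X -> \bar R) x :
  (0 <= global_slope d u x)%E.
Proof.
rewrite /global_slope; case: ifP => _; first by rewrite leey.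
by apply: ereal_sup_ubound; left.
Qed.

Lemma slope_le (R : realType) (X : Type) (d : X -> X -> R) (u : X -> \bar R)
  (hd : is_metric d) (hu_fin : never_minfty u) (e : R) (xb : X) :
  0 <= e -> u xb \is a fin_num -> (forall y, Sset d u e xb y -> y = xb) ->
  (global_slope d u xb <= e%:E)%E.
Proof.
case: hd => hpos hdeq hsym htri => he hx huniq.
rewrite /global_slope.
have -> : (u xb == +oo%E) = false by move: hx; rewrite fin_numE => /andP[_ /negbTE].
apply: ge_ereal_sup => _ [->|[y hy <-]]; first by rewrite lee_fin.
have hdp : 0 < d xb y.
  rewrite lt_neqAle hpos andbT; apply/negP => /eqP h.
  by apply: hy; symmetry; apply/hdeq.
have hnS : ~ Sset d u e xb y by move=> /huniq.
move: hnS; rewrite /Sset -(fineK hx); have := hu_fin y.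
case: (u y) => [r| |] // _ hnS.
  have hlt : fine (u xb) < r + e * d xb y.
    by rewrite ltNge; apply/negP => hle; apply: hnS; rewrite -EFinD lee_fin.
  rewrite lee_pdivrMr // -EFinB -EFinM.
  rewrite ge_max !lee_fin; apply/andP; split; first lra.
  by rewrite mulr_ge0 // ltW.
rewrite /= addeNy maxNye.


by rewrite mul0e lee_fin.
Qed.

Theorem proposition2p4 (R : realType) (X : Type) (d : X -> X -> R)
  (hd : is_metric d) (hc : complete_metric d)
  (u : X -> \bar R) (hu_fin : never_minfty u) (hu_proper : proper_fun u)
  (hu_lsc : lsc d u) (hu_bdd : bounded_below u) :
  exists z : nat -> X,
    (fun n => global_slope d u (z n)) @ \oo --> 0%E /\
    (\sum_(0 <= n <oo) (global_slope d u (z n) * (d (z n) (z n.+1))%:E) < +oo)%E.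
Proof.
have hd' := hd; case: hd' => hpos hdeq hsym htri.
case: hu_bdd => m hm; case: hu_proper => p hp.
have hpf : u p \is a fin_num by rewrite fin_numE hp andbT hu_fin.
have ek : forall q : R * X, exists y, 0 < q.1 -> u q.2 \is a fin_num ->
    Sset d u q.1 q.2 y /\ (global_slope d u y <= q.1%:E)%E.
  case=> e x /=.
  have [he|he] := boolP (0 < e); last by exists x.
  have [hx|hx] := boolP (u x \is a fin_num); last by exists x.
  have [xb [h1 h2]] := ekeland hd hc hu_fin hu_lsc hm he hx.
  exists xb => _ _; split => //.
  apply: slope_le => //; first exact: ltW.
  exact: (Sfin hu_fin hx h1).1.
have [f hf] := choice ek.
pose eps (n : nat) : R := (n.+1%:R)^-1.
have epsp : forall n, 0 < eps n by move=> n; rewrite /eps invr_gt0.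
have [z [z0 zS]] : exists z : nat -> X, z 0%N = f (eps 0%N, p) /\
    forall n, z n.+1 = f (eps n.+1, z n).
  by exists (fix z n := if n is k.+1 then f (eps k.+1, z k) else f (eps 0%N, p)).
have inv : forall n, u (z n) \is a fin_num /\ (global_slope d u (z n) <= (eps n)%:E)%E.
  elim=> [|n [ihf ihG]].
    have [h1 h2] := hf (eps 0%N, p) (epsp _) hpf.
    by rewrite z0; split => //; exact: (Sfin hu_fin hpf h1).1.
  have [h1 h2] := hf (eps n.+1, z n) (epsp _) ihf.
  by rewrite zS; split => //; exact: (Sfin hu_fin ihf h1).1.
have zSS : forall n, Sset d u (eps n.+1) (z n) (z n.+1).
  by move=> n; rewrite zS; exact: (hf (eps n.+1, z n) (epsp _) (inv n).1).1.
exists z; split.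
  apply: (@squeeze_cvge _ _ _ R (fun=> 0%E) _ (EFin \o harmonic)).
  - apply: nearW => n; rewrite slope_ge0 /=; exact: (inv n).2.
  - exact: cvg_cst.
  - exact: cvge_harmonic.
set F := fun n => (global_slope d u (z n) * (d (z n) (z n.+1))%:E)%E.
have F0 : forall n, (0 <= F n)%E.
  by move=> n; rewrite /F mule_ge0 ?slope_ge0 // lee_fin.
have Fle : forall n, (F n <= (2 * (fine (u (z n)) - fine (u (z n.+1))))%:E)%E.
  move=> n; rewrite /F.
  apply: le_trans.
    by apply: (lee_wpmul2r _ (inv n).2); rewrite lee_fin.
  rewrite -EFinM lee_fin.
  have [_ h] := Sfin hu_fin (inv n).1 (zSS n).
  have he := eps_le R n.
  have : eps n * d (z n) (z n.+1) <= 2 * eps n.+1 * d (z n) (z n.+1).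
    by apply: ler_wpM2r.
  rewrite /eps in h he *.
  set i := (n.+2%:R)^-1 in h he *; set j := (n.+1%:R)^-1 in h he *.
  set D := d (z n) (z n.+1) in h *.
  lra.
have part : forall n, (\sum_(0 <= i < n) F i <= (2 * (fine (u (z 0%N)) - fine (u (z n))))%:E)%E.
  elim=> [|n ih].
    by rewrite big_geq // subrr mulr0.
  rewrite big_nat_recr //=.
  apply: le_trans; first exact: (leeD ih (Fle n)).
  by rewrite -EFinD lee_fin; lra.
apply: (@le_lt_trans _ _ (2 * (fine (u (z 0%N)) - m))%:E); last exact: ltry.
apply: lime_le; first by apply: is_cvg_nneseries => i _ _; exact: (F0 i).
apply: nearW => n; apply: le_trans (part n) _.
rewrite lee_fin.
have : m <= fine (u (z n)).
  by rewrite -lee_fin fineK; [exact: hm | exact: (inv n).1].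
lra.
Qed.
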